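(* Fix $0<p<1$ and $m\ge1$. For each word $w$ with $|w|\le m-1$ define the weighted sibling difference $h^{(p)}_w=(1-p)1_{C_{w0}}-p\,1_{C_{w2}}$, and set $\phi=1_C$, $q=p^2+(1-p)^2$, $\mu(w)=\mu_p(C_w)$. Then: (1) The family $\{\phi\}\cup\{h^{(p)}_w:|w|\le m-1\}$ is an orthogonal basis of $\mathcal F_m$, and $\|h^{(p)}_w\|^2=p(1-p)\mu(w)$. (2) $K_m$ leaves $\mathcal F_m$ invariant and vanishes on $\mathcal F_m^{\perp}$. (3) For every $w$ with $|w|\le m-1$, $\langle h^{(p)}_w,K_m\phi\rangle=p(1-p)(2p-1)\mu(w)^2\sum_{j=0}^{m-|w|-1}q^j$. (4) For every $w$ with $|w|\le m-1$, $\langle h^{(p)}_w,K_mh^{(p)}_w\rangle=2p^2(1-p)^2\mu(w)^2\sum_{j=0}^{m-|w|-1}q^j$. (5) Let $u\ne v$ be words with $|u|,|v|\le m-1$. If $u,v$ are incomparable then $\langle h^{(p)}_u,K_mh^{(p)}_v\rangle=0$. If $u$ is a proper prefix of $v$, then $\langle h^{(p)}_u,K_mh^{(p)}_v\rangle=p(1-p)^2(2p-1)\mu(v)^2\sum_{j=0}^{m-|v|-1}q^j$ if $v$ begins with $u0$, and $=-p^2(1-p)(2p-1)\mu(v)^2\sum_{j=0}^{m-|v|-1}q^j$ if $v$ begins with $u2$. Consequently, in the orthonormal basis $e_\phi=\phi$, $e_w=h^{(p)}_w/\sqrt{p(1-p)\mu(w)}$ ($|w|\le m-1$), the matrix of $K_m|_{\mathcal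 F_m}$ is self-adjoint and its difference–difference block is tree-banded: $\langle e_v,K_me_u\rangle=0$ unless $u$ and $v$ are comparable. Moreover, $p=\tfrac12$ is the unique parameter in $(0,1)$ for which this matrix is diagonal in the weighted Haar basis.
   Context: Let $S_0(x)=x/3$, $S_2(x)=(x+2)/3$ on $[0,1]$ and let $C$ be the middle-third Cantor set ($C=S_0(C)\cup S_2(C)$). For $0<p<1$, $\mu_p$ is the unique Borel probability measure on $[0,1]$ with $\mu_p=p\,\mu_p\circ S_0^{-1}+(1-p)\,\mu_p\circ S_2^{-1}$ (supported on $C$). Finite words $w=(w_1,\dots,w_n)\in\{0,2\}^n$ have length $|w|=n$; $\varnothing$ is the empty word; $wa$ is concatenation. $u$ is a prefix of $v$ if $v$ extends $u$; $u,v$ are comparable if one is a prefix of the other. $S_w=S_{w_1}\circ\cdots\circ S_{w_n}$ ($S_\varnothing=\mathrm{id}$), and $C_w=S_w(C)$; thus $\mu_p(C_{w0})=p\mu_p(C_w)$, $\mu_p(C_{w2})=(1-p)\mu_p(C_w)$. The inner product on $L^2(\mu_p)$ is $\langle f,g\rangle=\int\overline f g\,d\mu_p$. $\mathcal F_m=\mathrm{span}\{1_{C_u}:|u|\le m\}$ and $K_mf=\sum_{|u|\le m}\langle 1_{C_u},f\rangle1_{C_u}$ for $f\in L^2(\mu_p)$. *)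

(* Defs.v *)
From HB Require Import structures.
From mathcomp Require Import all_boot all_order all_algebra.
From mathcomp Require Import all_classical all_reals all_analysis.
Set Implicit Arguments. Unset Strict Implicit. Unset Printing Implicit Defensive.
Import Order.TTheory GRing.Theory Num.Theory.
Import numFieldNormedType.Exports.
Local Open Scope classical_set_scope.
Local Open Scope ring_scope.

Section Cantor.
Variable R : realType.

(* Letters: false stands for the digit 0, true for the digit 2. *)
Definition Smap (a : bool) (x : R) : R := if a then (x + 2) / 3 else x / 3.
Definition S0 : R -> R := Smap false.
Definition S2 : R -> R := Smap true.

Definition Sw (w : seq bool) : R -> R := foldr (fun a f => Smap a \o f) id w.

Definition Cantor : set R :=
  [set x | forall n : nat, exists w : seq bool,
      size w = n /\ exists y : R, 0 <= y <= 1 /\ x = Sw w y].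

Definition Cw (w : seq bool) : set R := Sw w @` Cantor.

Definition sumw (n : nat) (F : seq bool -> R) : R :=
  \sum_(k < n) \sum_(t : k.-tuple bool) F (val t).

Variable mu : {measure set R -> \bar R}.

Definition ip (f g : R -> R) : R := \int[mu]_x (f x * g x).

Definition L2 (f : R -> R) : Prop :=
  measurable_fun setT f /\ (\int[mu]_x ((f x) ^+ 2)%:E < +oo)%E.

Definition inF (m : nat) (g : R -> R) : Prop :=
  measurable_fun setT g /\
  exists c : seq bool -> R,
    {ae mu, forall x, g x = sumw m.+1 (fun u => c u * \1_(Cw u) x)}.

Definition Km (m : nat) (f : R -> R) : R -> R :=
  fun x => sumw m.+1 (fun u => ip \1_(Cw u) f * \1_(Cw u) x).

Definition muw (w : seq bool) : R := fine (mu (Cw w)).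

Definition hw (p : R) (w : seq bool) : R -> R :=
  fun x => (1 - p) * \1_(Cw (rcons w false)) x - p * \1_(Cw (rcons w true)) x.

Definition ebasis (p : R) (o : option (seq bool)) : R -> R :=
  match o with
  | None => \1_Cantor
  | Some w => fun x => hw p w x / Num.sqrt (p * (1 - p) * muw w)
  end.

Definition valid_index (m : nat) (o : option (seq bool)) : bool :=
  match o with None => true | Some w => (size w < m)%N end.

End Cantor.

(* Main.v *)
Require Import Defs.
From HB Require Import structures.
From mathcomp Require Import all_boot all_order all_algebra.
From mathcomp Require Import all_classical all_reals all_analysis.
From mathcomp Require Import ring lra measurable_realfun.
Set Implicit Arguments. Unset Strict Implicit. Unset Printing Implicit Defensive.
Import Order.TTheory GRing.Theory Num.Theory.
Import numFieldNormedType.Exports.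
Local Open Scope classical_set_scope.
Local Open Scope ring_scope.

Section CantorSets.
Variable R : realType.
Local Notation Cw := (@Cw R).
Local Notation Sw := (@Sw R).
Implicit Types (a b : bool) (x y z : R) (w s t u v : seq bool).

Lemma Smap01 a y : 0 <= y <= 1 -> 0 <= Smap a y <= 1.
Proof. by case: a; rewrite /Smap => /andP[? ?]; apply/andP; split; lra. Qed.

Lemma Smap_eq a b y z : 0 <= y <= 1 -> 0 <= z <= 1 -> Smap a y = Smap b z ->
  a = b /\ y = z.
Proof.
by case: a; case: b; rewrite /Smap => /andP[? ?] /andP[? ?] H; split => //; lra.
Qed.

Lemma Smap_inj a : injective (@Smap R a).
Proof. by case: a; rewrite /Smap => y z H; lra. Qed.

Lemma Sw01 w y : 0 <= y <= 1 -> 0 <= Sw w y <= 1.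
Proof. by elim: w => [//|a w IH] Hy /=; exact/Smap01/IH. Qed.

Lemma Sw_cons a w y : Sw (a :: w) y = Smap a (Sw w y).
Proof. by []. Qed.

Lemma Sw_inj w : injective (Sw w).
Proof. by elim: w => [//|a w IH] y z /= /Smap_inj /IH. Qed.

Lemma Cantor01 x : Cantor x -> 0 <= x <= 1.
Proof. by move=> /(_ 0%N) [w [sw [y [Hy ->]]]]; case: w sw. Qed.

Lemma Cantor_S a x : Cantor x -> Cantor (Smap a x).
Proof.
move=> Cx [|n].
  exists [::]; split => //; exists (Smap a x); split => //.
  exact/Smap01/Cantor01.
have [w [sw [y [Hy ->]]]] := Cx n.
by exists (a :: w); split; [rewrite /= sw | exists y].
Qed.

Lemma Cantor_split x : Cantor x -> exists a y, Cantor y /\ x = Smap a y.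
Proof.
move=> Cx; have [w [sw [y [Hy xE]]]] := Cx 1%N.
case: w sw xE => [//|a [|//]] _ xE.
exists a, y; split => // n.
have [w' [sw' [z [Hz xE']]]] := Cx n.+1.
case: w' sw' xE' => [//|b w] [sw] xE'.
rewrite xE in xE'; have [ab yE] := Smap_eq Hy (Sw01 w Hz) xE'.
by exists w; split => //; exists z.
Qed.

Lemma Cw_nil : Cw [::] = @Cantor R.
Proof. by rewrite /Cw image_id. Qed.

Lemma Cw_cons a w : Cw (a :: w) = Smap a @` Cw w.
Proof. by rewrite /Cw -image_comp. Qed.

Lemma Cw_sub w : Cw w `<=` @Cantor R.
Proof.
elim: w => [|a w IH]; first by rewrite Cw_nil.
by rewrite Cw_cons => _ [y /IH Cy <-]; exact: Cantor_S.
Qed.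

Lemma Cw_cat_sub s t : Cw (s ++ t) `<=` Cw s.
Proof.
elim: s => [|a s IH] /=; first by rewrite Cw_nil; exact: Cw_sub.
by rewrite !Cw_cons => _ [y /IH Cy <-]; exists y.
Qed.

Lemma Cw_prefix_sub s t : prefix s t -> Cw t `<=` Cw s.
Proof. by move=> /prefixP [r ->]; exact: Cw_cat_sub. Qed.

Lemma Cw_disj s t : ~~ prefix s t -> ~~ prefix t s -> Cw s `&` Cw t = set0.
Proof.
elim: s t => [|a s IH] [|b t] //=.
rewrite !Cw_cons => H1 H2; apply/seteqP; split => // x [].
case=> y Cy <-; case=> z Cz E.
have [ab zy] := Smap_eq (Cantor01 (Cw_sub Cz)) (Cantor01 (Cw_sub Cy)) E; subst.
rewrite eqxx /= in H1 H2.
by have := IH _ H1 H2; move/seteqP => [/(_ y (conj Cy Cz))].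
Qed.


Definition Tinv a (x : R) : R := if a then 3 * x - 2 else 3 * x.

Lemma Smap_img a (A : set R) : Smap a @` A = Tinv a @^-1` A.
Proof.
apply/seteqP; split => x.
  by case=> y Ay <-; rewrite /Tinv /Smap /=; case: a; 
    [rewrite (_ : 3 * ((y + 2) / 3) - 2 = y) //; lra
    |rewrite (_ : 3 * (y / 3) = y) //; lra].
rewrite /Tinv /= => Ax; exists (Tinv a x) => //; rewrite /Tinv /Smap; case: a Ax => _; lra.
Qed.

Lemma meas_preimage (f : R -> R) (B : set R) :
  measurable_fun setT f -> measurable B -> measurable (f @^-1` B).
Proof. by move=> mf mB; rewrite -[f @^-1` B]setTI; exact: mf. Qed.

Lemma meas_Tinv a : measurable_fun setT (Tinv a).
Proof.
rewrite /Tinv; case: a.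
  apply: measurable_funB; last exact: measurable_cst.
  by apply: measurable_funM; [exact: measurable_cst|exact: measurable_id].
by apply: measurable_funM; [exact: measurable_cst|exact: measurable_id].
Qed.

Lemma meas_Smap a : measurable_fun setT (@Smap R a).
Proof.
rewrite /Smap; case: a.
  apply: measurable_funM; last exact: measurable_cst.
  by apply: measurable_funD; [exact: measurable_id|exact: measurable_cst].
by apply: measurable_funM; [exact: measurable_id|exact: measurable_cst].
Qed.

Lemma meas_img a (A : set R) : measurable A -> measurable (Smap a @` A).
Proof. by move=> mA; rewrite Smap_img; apply: meas_preimage => //; exact: meas_Tinv. Qed.

Fixpoint Dn (n : nat) : set R :=
  if n is n'.+1 then Smap false @` Dn n' `|` Smap true @` Dn n'
  else [set x | 0 <= x <= 1].

Lemma I01E : [set x : R | 0 <= x <= 1] = `[0, 1]%classic.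
Proof. by apply/seteqP; split => x /=; rewrite in_itv. Qed.

Lemma meas_I01 : measurable [set x : R | 0 <= x <= 1].
Proof. by rewrite I01E; exact: measurable_itv. Qed.

Lemma meas_Dn n : measurable (Dn n).
Proof.
elim: n => [|n IH] /=; first exact: meas_I01.
by apply: measurableU; exact: meas_img.
Qed.

Lemma Dn_E n x : Dn n x <-> exists w, size w = n /\ exists y, 0 <= y <= 1 /\ x = Sw w y.
Proof.
elim: n x => [|n IH] x /=.
  split; first by move=> Hx; exists [::]; split => //; exists x.
  by move=> [w [sw [y [Hy ->]]]]; case: w sw.
split.
  move=> H; have [a [z Dz <-]] : exists a, (Smap a @` Dn n) x.
    by case: H => H; [exists false | exists true].
  have [w [sw [y [Hy ->]]]] := (IH z).1 Dz.
  by exists (a :: w); split; [rewrite /= sw|exists y].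
move=> [w' [sw' [y [Hy ->]]]]; case: w' sw' => [//|a w] [sw].
have Dz : Dn n (Sw w y) by apply/IH; exists w; split => //; exists y.
by case: a; [right|left]; exists (Sw w y).
Qed.

Lemma Cantor_bigcap : @Cantor R = \bigcap_n Dn n.
Proof.
apply/seteqP; split => x.
  by move=> Cx n _; apply/Dn_E; exact: Cx.
by move=> H n; apply/Dn_E; exact: H.
Qed.

Lemma meas_Cantor : measurable (@Cantor R).
Proof. by rewrite Cantor_bigcap; apply: bigcapT_measurable => n; exact: meas_Dn. Qed.

Lemma meas_Cw w : measurable (Cw w).
Proof.
elim: w => [|a w IH]; first by rewrite Cw_nil; exact: meas_Cantor.
by rewrite Cw_cons; exact: meas_img.
Qed.

End CantorSets.

Section Measure.
Variable R : realType.
Variable p : R.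
Variable mu : probability R R.
Hypothesis Hp : 0 < p < 1.
Hypothesis H01 : mu [set x : R | 0 <= x <= 1] = 1%E.
Hypothesis Hself : forall A : set R, measurable A ->
     mu A = (p%:E * mu ((@S0 R) @^-1` A) + (1 - p)%:E * mu ((@S2 R) @^-1` A))%E.

Local Notation Cw := (@Cw R).
Local Notation I01 := [set x : R | 0 <= x <= 1].

Lemma H01' : mu I01 = 1%E. Proof. exact: H01. Qed.

Definition cw (a : bool) : R := if a then 1 - p else p.
Definition wt (w : seq bool) : R := \prod_(a <- w) cw a.

Lemma pre_img_same a (B : set R) : Smap a @^-1` (Smap a @` B) = B.
Proof.
apply/seteqP; split => x /=; last by move=> Bx; exists x.
by case=> y By /Smap_inj <-.
Qed.

Lemma pre_img_diff a b (B : set R) : a != b -> B `<=` I01 ->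
  Smap b @^-1` (Smap a @` B) `<=` ~` I01.
Proof.
move=> ab BI x /= [y By E] Ix.
have [ba _] := Smap_eq Ix (BI _ By) (esym E).
by rewrite ba eqxx in ab.
Qed.

Lemma mu_null (A : set R) : measurable A -> A `<=` ~` I01 -> mu A = 0%E.
Proof.
move=> mA AI; apply/eqP; rewrite eq_le measure_ge0 andbT.
have <- : mu (~` I01) = 0%E.
  rewrite probability_setC; last exact: meas_I01.
  by rewrite H01' subee.
by apply: le_measure => //; rewrite inE //; apply: measurableC; exact: meas_I01.
Qed.

Lemma mu_img a (B : set R) : measurable B -> B `<=` I01 ->
  mu (Smap a @` B) = ((cw a)%:E * mu B)%E.
Proof.
move=> mB BI; rewrite Hself; last exact: meas_img.
rewrite /S0 /S2 /cw; case: a.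
  rewrite pre_img_same (@mu_null (Smap false @^-1` (Smap true @` B))) ?mule0 ?add0e //.
    by apply: meas_preimage; [exact: meas_Smap|exact: meas_img].
  exact: pre_img_diff.
rewrite pre_img_same (@mu_null (Smap true @^-1` (Smap false @` B))) ?mule0 ?adde0 //.
  by apply: meas_preimage; [exact: meas_Smap|exact: meas_img].
exact: pre_img_diff.
Qed.

Lemma mu_Dn n : mu (Dn n) = 1%E.
Proof.
elim: n => [|n IH] /=; first exact: H01'.
have mD := meas_Dn n.+1.
have key : forall b, mu (Smap b @^-1` Dn n.+1) = 1%E.
  move=> b; apply/eqP; rewrite eq_le probability_le1 /=; last first.
    by apply: meas_preimage => //; exact: meas_Smap.
  rewrite -IH; apply: le_measure; rewrite ?inE //.
    exact: meas_Dn.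
    by apply: meas_preimage => //; exact: meas_Smap.
  by move=> x Dx /=; case: b; [right|left]; exists x.
rewrite Hself //= /S0 /S2 !key !mule1 -EFinD; congr EFin; ring.
Qed.

Lemma mu_Cantor : mu (@Cantor R) = 1%E.
Proof.
have : mu.-negligible (~` @Cantor R).
  rewrite Cantor_bigcap setC_bigcap; apply: negligible_bigcup => n.
  exists (~` Dn n); split => //.
    by apply: measurableC; exact: meas_Dn.
  have : mu (~` Dn n) = 0%E.
    by rewrite probability_setC ?mu_Dn ?subee //; exact: meas_Dn.
  by [].
move=> [A [mA A0 CA]].
apply/eqP; rewrite eq_le probability_le1 /=; last exact: meas_Cantor.
have <- : mu (~` A) = 1%E by rewrite probability_setC // A0 sube0.
apply: le_measure; rewrite ?inE //; first exact: measurableC.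
  exact: meas_Cantor.
by move=> x Ax; apply: contrapT => Cx; exact: Ax (CA _ Cx).
Qed.

Lemma mu_Cw w : mu (Cw w) = (wt w)%:E.
Proof.
elim: w => [|a w IH]; first by rewrite Cw_nil mu_Cantor /wt big_nil.
rewrite Cw_cons mu_img ?IH ?/wt ?big_cons ?EFinM //; first exact: meas_Cw.
by move=> x /Cw_sub /Cantor01.
Qed.

End Measure.

Section Integrals.
Variable R : realType.
Variable mu : probability R R.

Definition nice (f : R -> R) := measurable_fun setT f /\ exists M, forall x, `|f x| <= M.

Lemma nice_int f : nice f -> mu.-integrable setT (EFin \o f).
Proof.
move=> [mf [M HM]]; apply: measurable_bounded_integrable => //.
  exact: (le_lt_trans (probability_le1 mu measurableT) (ltry 1)).
rewrite /bounded_near; near=> M0.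
move=> x _ /=; apply: le_trans (HM x) _.
near: M0; apply: nbhs_pinfty_ge; exact: num_real.
Unshelve. all: end_near.
Qed.

Lemma nice_cst c : nice (fun _ => c).
Proof. by split; [exact: measurable_cst | exists `|c|]. Qed.

Lemma nice_indic (A : set R) : measurable A -> nice (\1_A).
Proof.
move=> mA; split; first exact: measurable_indic.
by exists 1 => x; rewrite indicE; case: (_ \in _); rewrite ?normr1 ?normr0.
Qed.

Lemma niceD f g : nice f -> nice g -> nice (fun x => f x + g x).
Proof.
move=> [mf [M HM]] [mg [N HN]]; split; first exact: measurable_funD.
by exists (M + N) => x; apply: le_trans (ler_normD _ _) _; apply: lerD.
Qed.

Lemma niceM f g : nice f -> nice g -> nice (fun x => f x * g x).
Proof.
move=> [mf [M HM]] [mg [N HN]]; split; first exact: measurable_funM.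
exists (M * N) => x; rewrite normrM; apply: ler_pM => //.
Qed.

Lemma niceN f : nice f -> nice (fun x => - f x).
Proof.
move=> nf; have := niceM (nice_cst (-1)) nf.
by congr nice; apply/funext => x; rewrite mulN1r.
Qed.

Lemma niceB f g : nice f -> nice g -> nice (fun x => f x - g x).
Proof. by move=> nf ng; apply: niceD => //; exact: niceN. Qed.

Lemma nice_sum I (r : seq I) (P : pred I) (F : I -> R -> R) :
  (forall i, nice (F i)) -> nice (fun x => \sum_(i <- r | P i) F i x).
Proof.
move=> nF; elim: r => [|i r IH].
  by have := nice_cst 0; congr nice; apply/funext => x; rewrite big_nil.
case: (boolP (P i)) => Pi.
  by have := niceD (nF i) IH; congr nice; apply/funext => x; rewrite big_cons Pi.
by have := IH; congr nice; apply/funext => x; rewrite big_cons (negbTE Pi).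
Qed.

Lemma ip_sym f g : ip mu f g = ip mu g f.
Proof. by rewrite /ip; congr Rintegral; apply/funext => x; rewrite mulrC. Qed.

Lemma ipD f g h : nice f -> nice g -> nice h ->
  ip mu f (fun x => g x + h x) = ip mu f g + ip mu f h.
Proof.
move=> nf ng nh; rewrite /ip.
rewrite (_ : (fun x => f x * (g x + h x)) = (fun x => f x * g x + f x * h x)); last first.
  by apply/funext => x; rewrite mulrDr.
by apply: RintegralD => //; apply: nice_int; apply: niceM.
Qed.

Lemma ipZ f g c : nice f -> nice g ->
  ip mu f (fun x => c * g x) = c * ip mu f g.
Proof.
move=> nf ng; rewrite /ip.
rewrite (_ : (fun x => f x * (c * g x)) = (fun x => c * (f x * g x))); last first.
  by apply/funext => x; rewrite mulrCA.
by apply: RintegralZl => //; apply: nice_int; apply: niceM.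
Qed.

Lemma ipN f g : nice f -> nice g -> ip mu f (fun x => - g x) = - ip mu f g.
Proof.
move=> nf ng; rewrite -mulN1r -ipZ //; congr ip; apply/funext => x.
by rewrite mulN1r.
Qed.

Lemma ipB f g h : nice f -> nice g -> nice h ->
  ip mu f (fun x => g x - h x) = ip mu f g - ip mu f h.
Proof. by move=> nf ng nh; rewrite ipD ?ipN //; exact: niceN. Qed.

Lemma ip0 f : ip mu f (fun _ => 0) = 0.
Proof.
have := @ipZ f (fun _ => 0) 0.
Abort.

Lemma ip_sum f I (r : seq I) (P : pred I) (F : I -> R -> R) :
  nice f -> (forall i, nice (F i)) ->
  ip mu f (fun x => \sum_(i <- r | P i) F i x) = \sum_(i <- r | P i) ip mu f (F i).
Proof.
move=> nf nF; elim: r => [|i r IH].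
  rewrite big_nil /ip (_ : (fun x => f x * (\sum_(i <- [::] | P i) F i x)) = (fun x => 0 * 0)).
    by rewrite RintegralZl ?mul0r //; apply: nice_int; exact: nice_cst.
  by apply/funext => x; rewrite big_nil !mulr0.
rewrite big_cons; case: (boolP (P i)) => Pi.
  rewrite -IH -ipD //; last exact: nice_sum.
  by congr ip; apply/funext => x; rewrite big_cons Pi.
by rewrite -IH; congr ip; apply/funext => x; rewrite big_cons (negbTE Pi).
Qed.

Lemma ip_indic (A B : set R) : measurable A -> measurable B ->
  ip mu (\1_A) (\1_B) = fine (mu (A `&` B)).
Proof.
move=> mA mB; rewrite /ip /Rintegral.
rewrite (_ : (fun x => ((\1_A x * \1_B x)%:E)) = (fun x => (\1_(A `&` B) x)%:E)).
  by rewrite integral_indic ?setIT //; exact: measurableI.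
by apply/funext => x; rewrite indicI.
Qed.

End Integrals.

Section Combi.
Variable R : realType.
Implicit Types (s t u v w : seq bool).

Lemma sum_tuple0 (F : seq bool -> R) : \sum_(t : 0.-tuple bool) F (val t) = F [::].
Proof. by rewrite (big_pred1 [tuple]) // => t; apply/esym/eqP; exact: tuple0. Qed.

Lemma sum_tupleS k (F : seq bool -> R) :
  \sum_(t : k.+1.-tuple bool) F (val t) =
  \sum_(t : k.-tuple bool) (F (false :: val t) + F (true :: val t)).
Proof.
rewrite (reindex (fun pt : bool * k.-tuple bool => [tuple of pt.1 :: val pt.2])) /=.
  rewrite -(pair_big xpredT xpredT (fun a (t : k.-tuple bool) => F (a :: val t))) /=.
  by rewrite big_bool big_split /= addrC.
exists (fun t : k.+1.-tuple bool => (thead t, [tuple of behead t])).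
  by move=> [a t] _ /=; congr pair; apply: val_inj.
by move=> t _; rewrite [in RHS](tuple_eta t); apply: val_inj.
Qed.

Lemma prefix_rcons_r s v b : prefix s (rcons v b) = (s == rcons v b) || prefix s v.
Proof.
elim: v s => [|c v IH] [|x s] //=.
  by rewrite ?eqseq_cons ?orbF.
by rewrite IH eqseq_cons andb_orr.
Qed.

Lemma prefix_rcons_same w a b : prefix (rcons w a) (rcons w b) = (a == b).
Proof.
rewrite prefix_rcons_r eqseq_rcons eqxx /=.
case: (a == b) => //=; apply/negP => /size_prefix; rewrite size_rcons ltnn //.
Qed.

Lemma not_prefix_rcons w a : ~~ prefix (rcons w a) w.
Proof. by apply/negP => /size_prefix; rewrite size_rcons ltnn. Qed.

Lemma prefix_cmp s u t : prefix s t -> prefix u t -> prefix s u || prefix u s.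
Proof.
elim: s u t => [|x s IH] [|z u] [|y t] //=; rewrite ?prefix0s ?orbT //.
by move=> /andP[/eqP -> H1] /andP[/eqP -> H2]; rewrite eqxx /=; exact: IH H1 H2.
Qed.

Lemma prefix_rcons_l w a u : prefix (rcons w a) u -> prefix w u.
Proof. exact/prefix_trans/prefix_rcons. Qed.

Lemma prefix_rcons2 w a b u : prefix (rcons w a) u -> prefix (rcons w b) u -> a = b.
Proof.
move=> H1 H2; have := prefix_cmp H1 H2; rewrite !prefix_rcons_same.
by case/orP => /eqP.
Qed.

Lemma prefix_proper u v : prefix u v -> u != v ->
  prefix (rcons u false) v || prefix (rcons u true) v.
Proof.
move=> /prefixP [[|c r] ->]; first by rewrite cats0 eqxx.
move=> _; rewrite -cat_rcons; case: c; rewrite prefix_prefix ?orbT //.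
Qed.

Variable p : R.
Definition cw' (a : bool) : R := if a then 1 - p else p.
Definition wt' (w : seq bool) : R := \prod_(a <- w) cw' a.
Definition q' := p ^+ 2 + (1 - p) ^+ 2.

Lemma wt'_cons a w : wt' (a :: w) = cw' a * wt' w.
Proof. by rewrite /wt' big_cons. Qed.

Lemma wt'_rcons w a : wt' (rcons w a) = wt' w * cw' a.
Proof. by rewrite /wt' -cats1 big_cat big_seq1. Qed.

Lemma sumq k : \sum_(t : k.-tuple bool) wt' (val t) ^+ 2 = q' ^+ k.
Proof.
elim: k => [|k IH]; first by rewrite (sum_tuple0 (fun s => wt' s ^+ 2)) /wt' big_nil expr1n expr0.
rewrite (sum_tupleS _ (fun s => wt' s ^+ 2)).
rewrite (eq_bigr (fun t : k.-tuple bool => q' * wt' (val t) ^+ 2)); last first.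
  by move=> t _; rewrite !wt'_cons /cw' /q'; ring.
by rewrite -mulr_sumr IH exprS.
Qed.

Lemma sum_prefix s k :
  \sum_(t : k.-tuple bool) (prefix s (val t))%:R * wt' (val t) ^+ 2 =
  if (size s <= k)%N then wt' s ^+ 2 * q' ^+ (k - size s) else 0.
Proof.
elim: s k => [|a s IH] k.
  rewrite /= subn0 /wt' big_nil expr1n mul1r -sumq.
  by apply: eq_bigr => t _; rewrite prefix0s mul1r.
case: k => [|k]; first by rewrite (sum_tuple0 (fun t => (prefix (a :: s) t)%:R * wt' t ^+ 2)) /= mul0r.
rewrite (sum_tupleS _ (fun t => (prefix (a :: s) t)%:R * wt' t ^+ 2)) /=.
rewrite (eq_bigr (fun t : k.-tuple bool =>
   cw' a ^+ 2 * ((prefix s (val t))%:R * wt' (val t) ^+ 2))); last first.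
  by move=> t _; rewrite !wt'_cons; case: a => /=; rewrite mul0r ?add0r ?addr0 /=; ring.
rewrite -mulr_sumr IH ltnS subSS wt'_cons.
by case: ifP => _; [ring | rewrite mulr0].
Qed.

Definition sumw' (n : nat) (F : seq bool -> R) : R :=
  \sum_(k < n) \sum_(t : k.-tuple bool) F (val t).

Lemma sum_prefix_all s n :
  sumw' n (fun t => (prefix s t)%:R * wt' t ^+ 2) =
  wt' s ^+ 2 * \sum_(j < n - size s) q' ^+ j.
Proof.
rewrite /sumw' (eq_bigr (fun k : 'I_n => if (size s <= k)%N
   then wt' s ^+ 2 * q' ^+ (k - size s) else 0)); last by move=> k _; exact: sum_prefix.
elim: n => [|n IH].
  rewrite big_ord0. rewrite sub0n big_ord0. by rewrite mulr0.
rewrite big_ord_recr /=. rewrite IH.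
case: (leqP (size s) n) => H.
  rewrite subSn //. rewrite big_ord_recr /=. by rewrite mulrDr.
rewrite addr0; congr (_ * _).
have -> : (n - size s = 0)%N by apply/eqP; rewrite subn_eq0 ltnW.
have -> : (n.+1 - size s = 0)%N by apply/eqP; rewrite subn_eq0.
by [].
Qed.

Lemma sum_tuple_eq k s (F : seq bool -> R) :
  \sum_(t : k.-tuple bool) (val t == s)%:R * F (val t) = (size s == k)%:R * F s.
Proof.
elim: k s F => [|k IH] s F.
  by rewrite (sum_tuple0 (fun t => (t == s)%:R * F t)); case: s => //= *; rewrite !mul0r.
rewrite (sum_tupleS _ (fun t => (t == s)%:R * F t)); case: s => [|a s].
  by rewrite big1 ?mul0r // => t _; rewrite !mul0r addr0.
rewrite /=.
rewrite (eq_bigr (fun t : k.-tuple bool => (val t == s)%:R * F (a :: val t))); last first.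
  by move=> t _; rewrite !eqseq_cons; case: a => /=; rewrite ?andbF mul0r ?add0r ?addr0 ?andbT.
by rewrite (IH s (fun t => F (a :: t))) eqSS.
Qed.

Lemma sumw'_single n s (F : seq bool -> R) : (size s < n)%N ->
  sumw' n (fun u => (u == s)%:R * F u) = F s.
Proof.
move=> Hs; rewrite /sumw'.
rewrite (eq_bigr (fun k : 'I_n => (size s == k)%:R * F s)); last first.
  by move=> k _; exact: sum_tuple_eq.
rewrite (bigD1 (Ordinal Hs)) //= eqxx mul1r big1 ?addr0 // => k Hk.
rewrite (_ : (size s == k) = false) ?mul0r //; apply/negP => /eqP E.
by move: Hk; rewrite -val_eqE /= E eqxx.
Qed.

Lemma sumw'D n F G : sumw' n (fun u => F u + G u) = sumw' n F + sumw' n G.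
Proof. by rewrite /sumw' -big_split; apply: eq_bigr => k _; rewrite big_split. Qed.

Lemma sumw'Z n c F : sumw' n (fun u => c * F u) = c * sumw' n F.
Proof. by rewrite /sumw' mulr_sumr; apply: eq_bigr => k _; rewrite mulr_sumr. Qed.

Lemma sumw'N n F : sumw' n (fun u => - F u) = - sumw' n F.
Proof.
rewrite -mulN1r -sumw'Z; rewrite /sumw'; apply: eq_bigr => k _.
by apply: eq_bigr => t _; rewrite mulN1r.
Qed.

Lemma sumw'B n F G : sumw' n (fun u => F u - G u) = sumw' n F - sumw' n G.
Proof. by rewrite sumw'D sumw'N. Qed.

Lemma sumw'_ext n F G : (forall u, F u = G u) -> sumw' n F = sumw' n G.
Proof. by move=> H; apply: eq_bigr => k _; apply: eq_bigr => t _. Qed.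

Lemma sumw'0 n : sumw' n (fun _ => 0) = 0.
Proof. by rewrite /sumw' big1 // => k _; rewrite big1. Qed.

End Combi.

Section Main.
Variable R : realType.
Variables (p : R) (mu : probability R R) (m : nat).
Hypothesis Hp : 0 < p < 1.
Hypothesis H01 : mu [set x : R | 0 <= x <= 1] = 1%E.
Hypothesis Hself : forall A : set R, measurable A ->
     mu A = (p%:E * mu ((@S0 R) @^-1` A) + (1 - p)%:E * mu ((@S2 R) @^-1` A))%E.

Local Notation Cw := (@Cw R).
Local Notation wt := (wt' p).
Local Notation ipm := (ip mu).
Local Notation h := (hw p).
Local Notation sw := (sumw' (R:=R)).
Implicit Types (f g : R -> R) (c : R) (a : bool) (u v w s t : seq bool).

Lemma muCw w : mu (Cw w) = (wt w)%:E.
Proof. exact: (mu_Cw H01 Hself). Qed.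

Lemma muw_wt w : muw mu w = wt w.
Proof. exact: (congr1 fine (muCw w)). Qed.

Lemma cw_gt0 a : 0 < cw' p a.
Proof. by case/andP: Hp => ? ?; case: a; rewrite /cw' //= subr_gt0. Qed.

Lemma wt_gt0 w : 0 < wt w.
Proof.
elim: w => [|a w IH]; first by rewrite /wt' big_nil.
by rewrite wt'_cons mulr_gt0 // cw_gt0.
Qed.

Lemma ip11 s t : ipm (\1_(Cw s)) (\1_(Cw t)) =
  if prefix s t then wt t else if prefix t s then wt s else 0.
Proof.
rewrite ip_indic; [|exact: meas_Cw|exact: meas_Cw].
case: ifP => st.
  by rewrite setIidr; [exact: (congr1 fine (muCw t)) | exact: Cw_prefix_sub].
case: ifP => ts.
  by rewrite setIidl; [exact: (congr1 fine (muCw s)) | exact: Cw_prefix_sub].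
have -> : Cw s `&` Cw t = set0 by apply: Cw_disj; rewrite ?st ?ts.
by rewrite measure0.
Qed.

Lemma ip11e s t : ipm (\1_(Cw s)) (fun x => \1_(Cw t) x) =
  if prefix s t then wt t else if prefix t s then wt s else 0.
Proof. exact: ip11. Qed.

Lemma nice1 w : nice (\1_(Cw w)).
Proof. by apply: nice_indic; exact: meas_Cw. Qed.

Lemma niceh w : nice (h w).
Proof.
by apply: niceB; apply: niceM; (exact: nice_cst || exact: nice1).
Qed.

Ltac nicet := repeat first [exact: nice1 | exact: niceh | exact: nice_cst | apply: niceM | apply: niceB | apply: niceD | apply: nice_sum => ?].

Definition hv w t := ((1 - p) * (prefix (rcons w false) t)%:R
                      - p * (prefix (rcons w true) t)%:R) * wt t.

Lemma ip1h t w : ipm (\1_(Cw t)) (h w) = hv w t.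
Proof.
rewrite /hw ipB; first last.
- by apply: niceM; [exact: nice_cst|exact: nice1].
- by apply: niceM; [exact: nice_cst|exact: nice1].
- exact: nice1.
rewrite !ipZ; try nicet.
rewrite !ip11e /hv.
case Htw: (prefix t w).
  have H0 := prefix_trans Htw (prefix_rcons w false).
  have H2 := prefix_trans Htw (prefix_rcons w true).
  have N0 : prefix (rcons w false) t = false.
    by apply/negP => /prefix_trans /(_ Htw); apply/negP; exact: not_prefix_rcons.
  have N2 : prefix (rcons w true) t = false.
    by apply/negP => /prefix_trans /(_ Htw); apply/negP; exact: not_prefix_rcons.
  by rewrite H0 H2 N0 N2 /= !wt'_rcons /cw' /=; ring.
have E0 : prefix t (rcons w false) = (t == rcons w false) by rewrite prefix_rcons_r Htw orbF.
have E2 : prefix t (rcons w true) = (t == rcons w true) by rewrite prefix_rcons_r Htw orbF.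
rewrite E0 E2.
case: (eqVneq t (rcons w false)) => [->|ne0].
  by rewrite eqseq_rcons andbF prefix_refl !prefix_rcons_same /=; ring.
case: (eqVneq t (rcons w true)) => [->|ne2].
  by rewrite prefix_refl !prefix_rcons_same /=; ring.
by case: (prefix (rcons w false) t); case: (prefix (rcons w true) t) => /=; ring.
Qed.

Lemma iph1 t w : ipm (h w) (\1_(Cw t)) = hv w t.
Proof. by rewrite ip_sym ip1h. Qed.

Lemma iphh u v : ipm (h u) (h v) = (1 - p) * hv u (rcons v false) - p * hv u (rcons v true).
Proof.
rewrite {2}/hw ipB; first last.
- by apply: niceM; [exact: nice_cst|exact: nice1].
- by apply: niceM; [exact: nice_cst|exact: nice1].
- exact: niceh.
by rewrite !ipZ; try nicet; rewrite !iph1.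
Qed.

Lemma ipK g f : nice g ->
  ipm g (Km mu m f) = sw m.+1 (fun u => ipm (\1_(Cw u)) f * ipm g (\1_(Cw u))).
Proof.
move=> ng; rewrite /Km /sumw /sumw' ip_sum //; last first.
  move=> k; apply: nice_sum => t; apply: niceM; [exact: nice_cst|exact: nice1].
apply: eq_bigr => k _; rewrite ip_sum //; last first.
  by move=> t; apply: niceM; [exact: nice_cst|exact: nice1].
by apply: eq_bigr => t _; rewrite ipZ //; nicet.
Qed.

Definition Gs (w : seq bool) := \sum_(j < m - size w) (q' p) ^+ j.

Lemma Sp_rcons w a :
  sw m.+1 (fun t => (prefix (rcons w a) t)%:R * wt t ^+ 2) = (wt w * cw' p a) ^+ 2 * Gs w.
Proof. by rewrite sum_prefix_all size_rcons subSS wt'_rcons. Qed.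

Lemma phiE : (\1_(@Cantor R) : R -> R) = \1_(Cw [::]).
Proof. by rewrite Cw_nil. Qed.

Lemma ip1phi u : ipm (\1_(Cw u)) (\1_(@Cantor R)) = wt u.
Proof. by rewrite phiE ip11 prefix0s; case: u. Qed.

Lemma thm3 w : ipm (h w) (Km mu m (\1_(@Cantor R))) =
  p * (1 - p) * (2 * p - 1) * wt w ^+ 2 * Gs w.
Proof.
rewrite ipK; last exact: niceh.
rewrite (@sumw'_ext _ _ _ (fun u => (1 - p) * ((prefix (rcons w false) u)%:R * wt u ^+ 2)
   - p * ((prefix (rcons w true) u)%:R * wt u ^+ 2))); last first.
  by move=> u; rewrite ip1phi iph1 /hv; ring.
by rewrite sumw'B !sumw'Z !Sp_rcons /cw'; ring.
Qed.

Lemma thm4 w : ipm (h w) (Km mu m (h w)) =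
  2 * p ^+ 2 * (1 - p) ^+ 2 * wt w ^+ 2 * Gs w.
Proof.
rewrite ipK; last exact: niceh.
rewrite (@sumw'_ext _ _ _ (fun u => (1 - p) ^+ 2 * ((prefix (rcons w false) u)%:R * wt u ^+ 2)
   + p ^+ 2 * ((prefix (rcons w true) u)%:R * wt u ^+ 2))); last first.
  move=> u; rewrite ip1h iph1 /hv.
  have NC : ~~ (prefix (rcons w false) u && prefix (rcons w true) u).
    by apply/negP => /andP[A B]; have := prefix_rcons2 A B.
  by move: NC; case: (prefix (rcons w false) u); case: (prefix (rcons w true) u) => //= _; ring.
by rewrite sumw'D !sumw'Z !Sp_rcons /cw'; ring.
Qed.

Lemma thm5a u v : ~~ prefix u v -> ~~ prefix v u -> ipm (h u) (Km mu m (h v)) = 0.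
Proof.
move=> uv vu; rewrite ipK; last exact: niceh.
rewrite -(sumw'0 R m.+1); apply: sumw'_ext => t.
rewrite ip1h iph1 /hv.
have NC : ~~ ((prefix (rcons v false) t || prefix (rcons v true) t) &&
              (prefix (rcons u false) t || prefix (rcons u true) t)).
  apply/negP => /andP[/orP A /orP B].
  have Hv : prefix v t by case: A => /prefix_rcons_l.
  have Hu : prefix u t by case: B => /prefix_rcons_l.
  by have := prefix_cmp Hu Hv; rewrite (negbTE uv) (negbTE vu).
move: NC; case: (prefix (rcons v false) t); case: (prefix (rcons v true) t);
  case: (prefix (rcons u false) t); case: (prefix (rcons u true) t) => //= _; ring.
Qed.

Lemma thm5b u v a : prefix (rcons u a) v -> ipm (h u) (Km mu m (h v)) =
  cw' p (~~ a) * (if a then -1 else 1) * p * (1 - p) * (2 * p - 1) * wt v ^+ 2 * Gs v.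
Proof.
move=> Huv; rewrite ipK; last exact: niceh.
rewrite (@sumw'_ext _ _ _ (fun t => (if a then - p else 1 - p) *
   ((1 - p) * ((prefix (rcons v false) t)%:R * wt t ^+ 2)
   - p * ((prefix (rcons v true) t)%:R * wt t ^+ 2)))); last first.
  move=> t; rewrite ip1h iph1 /hv.
  have I0 : prefix (rcons v false) t ==> prefix (rcons u a) t.
    by apply/implyP => /prefix_rcons_l; exact: prefix_trans.
  have I2 : prefix (rcons v true) t ==> prefix (rcons u a) t.
    by apply/implyP => /prefix_rcons_l; exact: prefix_trans.
  have NC : ~~ (prefix (rcons u false) t && prefix (rcons u true) t).
    by apply/negP => /andP[A B]; have := prefix_rcons2 A B.
  move: I0 I2 NC; case: a Huv => _;
  case: (prefix (rcons v false) t); case: (prefix (rcons v true) t);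
  case: (prefix (rcons u false) t); case: (prefix (rcons u true) t) => //= _ _ _; ring.
rewrite sumw'Z sumw'B !sumw'Z !Sp_rcons /cw'; case: a {Huv} => /=; ring.
Qed.


Lemma sumwE n F : sumw n F = sw n F.
Proof. by []. Qed.

Lemma sumw'_ext_in n F G : (forall u, (size u < n)%N -> F u = G u) -> sw n F = sw n G.
Proof.
by move=> H; apply: eq_bigr => k _; apply: eq_bigr => t _; apply: H; rewrite size_tuple.
Qed.

Lemma niceK f : nice (Km mu m f).
Proof. by rewrite /Km /sumw; nicet. Qed.

Lemma ipK_sym f g : nice f -> nice g -> ipm f (Km mu m g) = ipm g (Km mu m f).
Proof.
move=> nf ng; rewrite !ipK //; apply: sumw'_ext => u.
by rewrite [X in _ * X = _]ip_sym [X in _ = _ * X]ip_sym mulrC.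
Qed.

Lemma ipZr f g c : nice f -> nice g -> ipm f (fun x => g x / c) = ipm f g / c.
Proof.
move=> nf ng; rewrite (_ : (fun x => g x / c) = (fun x => c^-1 * g x)).
  by rewrite ipZ // mulrC.
by apply/funext => x; rewrite mulrC.
Qed.

Lemma ipZl f g c : nice f -> nice g -> ipm (fun x => f x / c) g = ipm f g / c.
Proof. by move=> nf ng; rewrite ip_sym ipZr // ip_sym. Qed.

Lemma ipK_Z f g c : nice f -> nice g ->
  ipm f (Km mu m (fun x => g x / c)) = ipm f (Km mu m g) / c.
Proof.
move=> nf ng; rewrite !ipK // [RHS]mulrC -sumw'Z; apply: sumw'_ext => u.
rewrite ipZr //; last exact: nice1.
ring.
Qed.

Lemma niceZr g c : nice g -> nice (fun x => g x / c).
Proof. by move=> ng; apply: niceM => //; exact: nice_cst. Qed.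

Lemma nice_phi : nice (\1_(@Cantor R)).
Proof. by rewrite phiE; exact: nice1. Qed.

Lemma prefix_rcons_nil w a : prefix (rcons w a) [::] = false.
Proof. by case: w. Qed.

Lemma ip_phi_phi : ipm (\1_(@Cantor R)) (\1_(@Cantor R)) = 1.
Proof. by rewrite phiE ip11 prefix_refl /wt' big_nil. Qed.

Lemma ip_phi_h w : ipm (\1_(@Cantor R)) (h w) = 0.
Proof. by rewrite phiE ip1h /hv !prefix_rcons_nil /=; ring. Qed.

Lemma ip_hh_neq u v : u != v -> ipm (h u) (h v) = 0.
Proof.
move=> uv; rewrite iphh /hv !prefix_rcons_r !eqseq_rcons (negbTE uv) /= !wt'_rcons /cw'.
ring.
Qed.

Lemma ip_hh w : ipm (h w) (h w) = p * (1 - p) * wt w.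
Proof. by rewrite iphh /hv !prefix_rcons_same /= !wt'_rcons /cw'; ring. Qed.

Lemma p_neq0 : p != 0. Proof. by case/andP: Hp => ? ?; rewrite gt_eqF. Qed.
Lemma p1_neq0 : 1 - p != 0. Proof. by case/andP: Hp => ? ?; rewrite subr_eq0 eq_sym lt_eqF. Qed.
Lemma wt_neq0 w : wt w != 0. Proof. by rewrite gt_eqF // wt_gt0. Qed.

Lemma X_gt0 w : 0 < p * (1 - p) * wt w.
Proof. by case/andP: Hp => ? ?; rewrite !mulr_gt0 ?subr_gt0 ?wt_gt0. Qed.

Lemma Sw_rcons w a (y : R) : Sw w (Smap a y) = Sw (rcons w a) y.
Proof. by elim: w => [|b w IH] //=; rewrite IH. Qed.

Lemma indic_split w x :
  (\1_(Cw w) x : R) = \1_(Cw (rcons w false)) x + \1_(Cw (rcons w true)) x.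
Proof.
have D : Cw (rcons w false) `&` Cw (rcons w true) = set0.
  by apply: Cw_disj; rewrite prefix_rcons_same.
rewrite !indicE; case: (boolP (x \in Cw w)) => H.
  have [y Cy xE] := set_mem H.
  have [a [z [Cz yE]]] := Cantor_split Cy.
  have Ia : Cw (rcons w a) x by exists z => //; rewrite -Sw_rcons -yE.
  case: a yE Ia => yE Ia.
    rewrite (mem_set Ia) memNset ?add0r // => I0.
    by have := D; move/seteqP => [/(_ x (conj I0 Ia))].
  rewrite (mem_set Ia) memNset ?addr0 // => I2.
  by have := D; move/seteqP => [/(_ x (conj Ia I2))].
rewrite !memNset ?addr0 //.
  by move=> /(Cw_prefix_sub (prefix_rcons w true)) Hx; move/negP: H; apply; exact: mem_set.
by move=> /(Cw_prefix_sub (prefix_rcons w false)) Hx; move/negP: H; apply; exact: mem_set.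
Qed.

Definition Span (f : R -> R) := exists (a : R) (b : seq bool -> R),
  forall x, f x = a * \1_(@Cantor R) x + sumw m (fun w => b w * h w x).

Lemma span_ext f g : (forall x, f x = g x) -> Span g -> Span f.
Proof. by move=> E [a [b H]]; exists a, b => x; rewrite E H. Qed.

Lemma span0 : Span (fun _ => 0).
Proof.
exists 0, (fun _ => 0) => x /=.
have -> : sumw m (fun w => 0 * h w x) = 0.
  by rewrite -[RHS](sumw'0 R m); apply: sumw'_ext => u /=; ring.
ring.
Qed.

Lemma spanD f g : Span f -> Span g -> Span (fun x => f x + g x).
Proof.
move=> [a [b Hf]] [a' [b' Hg]]; exists (a + a'), (fun w => b w + b' w) => x.
have -> : sumw m (fun w => (b w + b' w) * h w x) =
   sumw m (fun w => b w * h w x) + sumw m (fun w => b' w * h w x).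
  by rewrite -sumw'D; apply: sumw'_ext => u /=; rewrite mulrDl.
rewrite Hf Hg; ring.
Qed.

Lemma spanZ c f : Span f -> Span (fun x => c * f x).
Proof.
move=> [a [b Hf]]; exists (c * a), (fun w => c * b w) => x.
have -> : sumw m (fun w => c * b w * h w x) = c * sumw m (fun w => b w * h w x).
  by rewrite -sumw'Z; apply: sumw'_ext => u /=; rewrite mulrA.
rewrite Hf; ring.
Qed.

Lemma span_sum I (r : seq I) (P : pred I) (F : I -> R -> R) :
  (forall i, Span (F i)) -> Span (fun x => \sum_(i <- r | P i) F i x).
Proof.
move=> SF; elim: r => [|i r IH].
  by apply: span_ext span0 => x; rewrite big_nil.
case: (boolP (P i)) => Pi.
  by apply: span_ext (spanD (SF i) IH) => x; rewrite big_cons Pi.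
by apply: span_ext IH => x; rewrite big_cons (negbTE Pi).
Qed.

Lemma span_h w : (size w < m)%N -> Span (h w).
Proof.
move=> Hw; exists 0, (fun u => (u == w)%:R) => x.
have -> : sumw m (fun u => (u == w)%:R * h u x) = h w x.
  exact: (@sumw'_single _ m w (fun u => h u x)).
ring.
Qed.

Lemma span_1 u : (size u <= m)%N -> Span (\1_(Cw u)).
Proof.
elim/last_ind: u => [|w a IH] Hs.
  exists 1, (fun _ => 0) => x; rewrite mul1r phiE.
  have -> : sumw m (fun w => 0 * h w x) = 0.
    by rewrite -[RHS](sumw'0 R m); apply: sumw'_ext => u /=; ring.
  by rewrite addr0.
rewrite size_rcons in Hs.
have Sw1 := IH (ltnW Hs); have Sh := span_h Hs.
case: a.
  apply: span_ext (spanD (spanZ (1 - p) Sw1) (spanZ (-1) Sh)) => x.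
  by rewrite /= (indic_split w x) /hw; ring.
apply: span_ext (spanD (spanZ p Sw1) (spanZ 1 Sh)) => x.
by rewrite /= (indic_split w x) /hw; ring.
Qed.

Lemma inF_1 u : (size u <= m)%N -> inF mu m (\1_(Cw u)).
Proof.
move=> Hu; split; first exact: (nice1 u).1.
exists (fun v => (v == u)%:R); apply: aeW => x.
symmetry; exact: (@sumw'_single _ m.+1 u (fun v => \1_(Cw v) x)).
Qed.

Lemma inF_phi : inF mu m (\1_(@Cantor R)).
Proof. by rewrite phiE; exact: inF_1. Qed.

Lemma inF_h w : (size w < m)%N -> inF mu m (h w).
Proof.
move=> Hw; split; first exact: (niceh w).1.
exists (fun v => (1 - p) * (v == rcons w false)%:R - p * (v == rcons w true)%:R).
apply: aeW => x; rewrite sumwE.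
rewrite (@sumw'_ext _ _ _ (fun v => (1 - p) * ((v == rcons w false)%:R * \1_(Cw v) x)
   - p * ((v == rcons w true)%:R * \1_(Cw v) x))); last by move=> v; ring.
rewrite sumw'B !sumw'Z.
have -> : sw m.+1 (fun v => (v == rcons w false)%:R * \1_(Cw v) x) = \1_(Cw (rcons w false)) x.
  by apply: (@sumw'_single _ m.+1 (rcons w false) (fun v => \1_(Cw v) x)); rewrite size_rcons.
have -> : sw m.+1 (fun v => (v == rcons w true)%:R * \1_(Cw v) x) = \1_(Cw (rcons w true)) x.
  by apply: (@sumw'_single _ m.+1 (rcons w true) (fun v => \1_(Cw v) x)); rewrite size_rcons.
by [].
Qed.

Lemma inF_K f : inF mu m (Km mu m f).
Proof.
split; first exact: (niceK f).1.
by exists (fun u => ipm (\1_(Cw u)) f); apply: aeW.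
Qed.

Lemma span_all g : inF mu m g -> exists (a : R) (b : seq bool -> R),
  {ae mu, forall x, g x = a * \1_(@Cantor R) x + sumw m (fun w => b w * h w x)}.
Proof.
move=> [_ [c Hc]].
have [a [b Hab]] : Span (fun x => sumw m.+1 (fun u => c u * \1_(Cw u) x)).
  apply: span_sum => k; apply: span_sum => t; apply: spanZ; apply: span_1.
  by rewrite size_tuple -ltnS.
exists a, b; apply: filterS Hc => x ->; exact: Hab.
Qed.

Lemma K_orth f : (forall g, inF mu m g -> ipm g f = 0) -> {ae mu, forall x, Km mu m f x = 0}.
Proof.
move=> H; apply: aeW => x; rewrite /Km -[RHS](sumw'0 R m.+1); apply: sumw'_ext_in => u Hu.
by rewrite H ?mul0r //; apply: inF_1; rewrite -ltnS.
Qed.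


Definition cN w := Num.sqrt (p * (1 - p) * muw mu w).

Lemma cN_gt0 w : 0 < cN w.
Proof. by rewrite /cN sqrtr_gt0 muw_wt X_gt0. Qed.

Lemma cN_neq0 w : cN w != 0.
Proof. by rewrite gt_eqF // cN_gt0. Qed.

Lemma cN_sqr w : cN w ^+ 2 = p * (1 - p) * wt w.
Proof. by rewrite /cN sqr_sqrtr muw_wt // ltW // X_gt0. Qed.

Lemma nice_e o : nice (ebasis mu p o).
Proof. by case: o => [w|] /=; [apply: niceZr; exact: niceh | exact: nice_phi]. Qed.

Lemma Gs_nil_gt0 : (0 < m)%N -> 0 < Gs [::].
Proof.
move=> Hm'; rewrite /Gs subn0; case: m Hm' => [//|n] _; rewrite big_ord_recl expr0.
have : 0 <= \sum_(i < n) q' p ^+ (bump 0 i).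
  apply: sumr_ge0 => i _; apply: exprn_ge0.
  by rewrite /q' addr_ge0 // sqr_ge0.
move=> H; lra.
Qed.

Lemma main_result : (0 < m)%N ->
  [/\ inF mu m (\1_(@Cantor R)) /\ (forall w, (size w < m)%N -> inF mu m (h w)),
      ipm (\1_(@Cantor R)) (\1_(@Cantor R)) != 0 /\
        (forall w, (size w < m)%N -> ipm (\1_(@Cantor R)) (h w) = 0),
      (forall u v, (size u < m)%N -> (size v < m)%N -> u <> v ->
          ipm (h u) (h v) = 0),
      (forall w, (size w < m)%N ->
          ipm (h w) (h w) = p * (1 - p) * muw mu w /\ ipm (h w) (h w) != 0)
    & (forall g, inF mu m g -> exists (a : R) (b : seq bool -> R),
          {ae mu, forall x, g x = a * \1_(@Cantor R) x + sumw m (fun w => b w * h w x)})] /\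
  ((forall f, inF mu m f -> inF mu m (Km mu m f)) /\
   (forall f, L2 mu f -> (forall g, inF mu m g -> ipm g f = 0) ->
       {ae mu, forall x, Km mu m f x = 0})) /\
  (forall w, (size w < m)%N ->
     ipm (h w) (Km mu m (\1_(@Cantor R))) = p * (1 - p) * (2 * p - 1) * muw mu w ^+ 2 * Gs w) /\
  (forall w, (size w < m)%N ->
     ipm (h w) (Km mu m (h w)) = 2 * p ^+ 2 * (1 - p) ^+ 2 * muw mu w ^+ 2 * Gs w) /\
  (forall u v, u <> v -> (size u < m)%N -> (size v < m)%N ->
     [/\ (~~ prefix u v -> ~~ prefix v u -> ipm (h u) (Km mu m (h v)) = 0),
         (prefix (rcons u false) v ->
            ipm (h u) (Km mu m (h v)) = p * (1 - p) ^+ 2 * (2 * p - 1) * muw mu v ^+ 2 * Gs v)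
       & (prefix (rcons u true) v ->
            ipm (h u) (Km mu m (h v)) = - (p ^+ 2 * (1 - p) * (2 * p - 1) * muw mu v ^+ 2 * Gs v))]) /\
  [/\ (forall (a b : option (seq bool)), valid_index m a -> valid_index m b ->
          ipm (ebasis mu p a) (ebasis mu p b) = (a == b)%:R),
       (forall (a b : option (seq bool)), valid_index m a -> valid_index m b ->
          ipm (ebasis mu p a) (Km mu m (ebasis mu p b)) = ipm (ebasis mu p b) (Km mu m (ebasis mu p a))),
       (forall u v, (size u < m)%N -> (size v < m)%N -> ~~ prefix u v -> ~~ prefix v u ->
          ipm (ebasis mu p (Some v)) (Km mu m (ebasis mu p (Some u))) = 0)
     & ((forall (a b : option (seq bool)), valid_index m a -> valid_index m b -> a <> b ->
          ipm (ebasis mu p a) (Km mu m (ebasis mu p b)) = 0) <-> p = 1 / 2)].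
Proof.
move=> Hm.
have ppos := Hp; case/andP: ppos => p0 p1.
split; [split|].
- by split; [exact: inF_phi | move=> w Hw; exact: inF_h].
- by rewrite ip_phi_phi oner_neq0; split => // w _; exact: ip_phi_h.
- by move=> u v _ _ /eqP uv; exact: ip_hh_neq.
- move=> w _; rewrite ip_hh muw_wt; split => //.
  by rewrite gt_eqF // X_gt0.
- exact: span_all.
split; [split|].
- by move=> f _; exact: inF_K.
- by move=> f _ H; exact: K_orth.
split; first by move=> w _; rewrite thm3 muw_wt.
split; first by move=> w _; rewrite thm4 muw_wt.
split.
  move=> u v uv _ _; split.
  - exact: thm5a.
  - by move=> H; rewrite (thm5b H) muw_wt /cw' /=; ring.
  - by move=> H; rewrite (thm5b H) muw_wt /cw' /=; ring.
split.
- move=> [a|] [b|] _ _ /=.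
  + rewrite ipZl; [|exact: niceh|exact: niceZr (niceh b)].
    rewrite ipZr; [|exact: niceh|exact: niceh].
    case: (eqVneq a b) => [<-|ab].
      rewrite eqxx ip_hh -cN_sqr; have := cN_neq0 a; move=> cn.
      by rewrite -/(cN a) expr2 mulfK // divff.
    by rewrite ip_hh_neq // !mul0r; case: eqP => // -[] /eqP; rewrite (negbTE ab).
  + rewrite ipZl; [|exact: niceh|exact: nice_phi].
    by rewrite ip_sym ip_phi_h mul0r.
  + rewrite ipZr; [|exact: nice_phi|exact: niceh].
    by rewrite ip_phi_h mul0r.
  + by rewrite ip_phi_phi.
- by move=> a b _ _; apply: ipK_sym; exact: nice_e.
- move=> u v _ _ uv vu /=.
  rewrite ipZl; [|exact: niceh|exact: niceK].
  rewrite ipK_Z; [|exact: niceh|exact: niceh].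
  by rewrite thm5a // !mul0r.
split.
  move=> H.
  have := H None (Some [::]) erefl Hm (fun E => ltac:(discriminate E)).
  rewrite /= ipK_Z; [|exact: nice_phi|exact: niceh].
  rewrite ipK_sym; [|exact: nice_phi|exact: niceh].
  rewrite thm3 => /eqP.
  rewrite !mulf_eq0 invr_eq0 (negbTE (cN_neq0 _)) (negbTE p_neq0) (negbTE p1_neq0).
  rewrite (negbTE (wt_neq0 _)) (gt_eqF (Gs_nil_gt0 Hm)) !orbF.
  by move=> /eqP E; lra.
move=> p12.
have h2 : 2 * p - 1 = 0 by lra.
move=> [a|] [b|] Va Vb ab /=.
- rewrite ipZl; [|exact: niceh|exact: niceK].
  rewrite ipK_Z; [|exact: niceh|exact: niceh].
  have ab' : a != b by apply/eqP => E; apply: ab; rewrite E.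
  suff -> : ipm (h a) (Km mu m (h b)) = 0 by rewrite !mul0r.
  case: (boolP (prefix a b)) => pab.
    have := prefix_proper pab ab'; case/orP => H.
      by rewrite (thm5b H) h2; ring.
    by rewrite (thm5b H) h2; ring.
  case: (boolP (prefix b a)) => pba; last exact: thm5a.
  rewrite ipK_sym; [|exact: niceh|exact: niceh].
  have := prefix_proper pba; rewrite eq_sym => /(_ ab'); case/orP => H.
    by rewrite (thm5b H) h2; ring.
  by rewrite (thm5b H) h2; ring.
- rewrite ipZl; [|exact: niceh|exact: niceK].
  by rewrite thm3 h2; ring.
- rewrite ipK_Z; [|exact: nice_phi|exact: niceh].
  rewrite ipK_sym; [|exact: nice_phi|exact: niceh].
  by rewrite thm3 h2; ring.
- by case: ab.
Qed.

End Main.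

Theorem theorem4p1 (R : realType) (p : R) (mu : probability R R) (m : nat) :
  0 < p < 1 -> (0 < m)%N ->
  mu [set x : R | 0 <= x <= 1] = 1%E ->
  (forall A : set R, measurable A ->
     mu A = (p%:E * mu ((@S0 R) @^-1` A) + (1 - p)%:E * mu ((@S2 R) @^-1` A))%E) ->
  let q := p ^+ 2 + (1 - p) ^+ 2 in
  let phi : R -> R := \1_(@Cantor R) in
  let h := hw p in
  let K := Km mu m in
  let G := fun w : seq bool => \sum_(j < m - size w) q ^+ j in
  (* (1) orthogonal basis of F_m *)
  [/\ inF mu m phi /\ (forall w, (size w < m)%N -> inF mu m (h w)),
      ip mu phi phi != 0 /\ (forall w, (size w < m)%N -> ip mu phi (h w) = 0),
      (forall u v, (size u < m)%N -> (size v < m)%N -> u <> v ->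
          ip mu (h u) (h v) = 0),
      (forall w, (size w < m)%N ->
          ip mu (h w) (h w) = p * (1 - p) * muw mu w /\ ip mu (h w) (h w) != 0)
    & (forall g, inF mu m g -> exists (a : R) (b : seq bool -> R),
          {ae mu, forall x, g x = a * phi x + sumw m (fun w => b w * h w x)})] /\
  (* (2) *)
  ((forall f, inF mu m f -> inF mu m (K f)) /\
   (forall f, L2 mu f -> (forall g, inF mu m g -> ip mu g f = 0) ->
       {ae mu, forall x, K f x = 0})) /\
  (* (3) *)
  (forall w, (size w < m)%N ->
     ip mu (h w) (K phi) = p * (1 - p) * (2 * p - 1) * muw mu w ^+ 2 * G w) /\
  (* (4) *)
  (forall w, (size w < m)%N ->
     ip mu (h w) (K (h w)) = 2 * p ^+ 2 * (1 - p) ^+ 2 * muw mu w ^+ 2 * G w) /\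
  (* (5) *)
  (forall u v, u <> v -> (size u < m)%N -> (size v < m)%N ->
     [/\ (~~ prefix u v -> ~~ prefix v u -> ip mu (h u) (K (h v)) = 0),
         (prefix (rcons u false) v ->
            ip mu (h u) (K (h v)) = p * (1 - p) ^+ 2 * (2 * p - 1) * muw mu v ^+ 2 * G v)
       & (prefix (rcons u true) v ->
            ip mu (h u) (K (h v)) = - (p ^+ 2 * (1 - p) * (2 * p - 1) * muw mu v ^+ 2 * G v))]) /\
  (* consequences in the orthonormal basis *)
  (let e := ebasis mu p in
   [/\ (forall a b, valid_index m a -> valid_index m b ->
          ip mu (e a) (e b) = (a == b)%:R),
       (forall a b, valid_index m a -> valid_index m b ->
          ip mu (e a) (K (e b)) = ip mu (e b) (K (e a))),
       (forall u v, (size u < m)%N -> (size v < m)%N -> ~~ prefix u v -> ~~ prefix v u ->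
          ip mu (e (Some v)) (K (e (Some u))) = 0)
     & ((forall a b, valid_index m a -> valid_index m b -> a <> b ->
          ip mu (e a) (K (e b)) = 0) <-> p = 1 / 2)]).
Proof.
move=> Hp Hm H01 Hself.
exact: main_result.
Qed.
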